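(* Let $E(q)=\prod_{k\ge1}(1-q^k)$ and $$X=\frac{E(q^2)^4E(q^3)^8}{E(q)^8E(q^6)^4}.$$ Let $U$ be the operator on formal Laurent series defined by $U\left(\sum_{n\ge n_0}a_nq^n\right)=\sum_{3n\ge n_0}a_{3n}q^n$. Then \begin{align*} U(X)&=10X-36X^2+27X^3,\\ U(X^2)&=-8X+306X^2-2160X^3+5508X^4-5832X^5+2187X^6,\\ U(X^3)&=X-360X^2+10566X^3-99144X^4+423549X^5-944784X^6\\ &\qquad+1141614X^7-708588X^8+177147X^9. \end{align*}
   Context: All identities are identities of formal power series in $q$ (equivalently of holomorphic functions of $\tau$ in the upper half plane with $q=e^{2\pi i\tau}$). *)

(* Defs.v *)
From Stdlib Require Import BinNums BinPos ZArith.
From mathcomp Require Import all_boot all_order all_algebra.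
Set Implicit Arguments. Unset Strict Implicit. Unset Printing Implicit Defensive.
Import GRing.Theory Num.Theory.
Local Open Scope ring_scope.

Definition series := nat -> int.

Definition sone : series := fun n => (n == 0%N)%:R.

Definition smul (f g : series) : series :=
  fun n => \sum_(i < n.+1) f i * g (n - i)%N.

Definition spow (f : series) (k : nat) : series := iter k (smul f) sone.

(* Multiplicative inverse of a series with constant term 1:
   1/f = sum_{j>=0} (1 - f)^j ; the coefficient of q^n only involves j <= n. *)
Definition sinv (f : series) : series :=
  fun n => \sum_(j < n.+1) spow (fun m => sone m - f m) j n.

(* E(q^m) = prod_{k>=1} (1 - q^(m k)); the coefficient of q^n only involves
   the factors with k <= n. *)
Definition Eser (m : nat) : series :=
  fun n => (\prod_(1 <= k < n.+1) (1 - 'X^(m * k)) : {poly int})`_n.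

Definition Xser : series :=
  smul (smul (spow (Eser 2) 4) (spow (Eser 3) 8))
       (sinv (smul (spow (Eser 1) 8) (spow (Eser 6) 4))).

Definition Uop (f : series) : series := fun n => f (3 * n)%N.

(* Binary integer literals (Stdlib Z) cast into MathComp's int, to avoid
   unary representations of large constants. *)
Definition zi (z : BinNums.Z) : int :=
  match z with
  | BinNums.Z0 => 0
  | BinNums.Zpos p => Posz (BinPos.Pos.to_nat p)
  | BinNums.Zneg p => - Posz (BinPos.Pos.to_nat p)
  end.

(* polynomial combination  sum_i cs_i f^i  (cs listed from degree 0) *)
Definition scomb (cs : seq BinNums.Z) (f : series) : series :=
  fun n => \sum_(i < size cs) zi (nth BinNums.Z0 cs i) * spow f i n.
Delimit Scope Z_scope with coqZ.

(* Main.v *)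
From HB Require Import structures.
From Stdlib Require Import BinNums BinPos ZArith.
From mathcomp Require Import all_boot all_order all_algebra.
From mathcomp Require Import boolp.
From mathcomp Require Import ring zify.
Require Import Defs.
Set Implicit Arguments. Unset Strict Implicit. Unset Printing Implicit Defensive.
Import GRing.Theory Num.Theory.
Local Open Scope ring_scope.

Definition fps : Type := nat -> int.
HB.instance Definition _ := gen_eqMixin fps.
HB.instance Definition _ := gen_choiceMixin fps.

Definition fadd (f g : fps) : fps := fun n => f n + g n.
Definition fopp (f : fps) : fps := fun n => - f n.
Definition fzero : fps := fun _ => 0.

Lemma faddA : associative fadd.
Proof. by move=> f g h; apply: funext => n; rewrite /fadd addrA. Qed.
Lemma faddC : commutative fadd.
Proof. by move=> f g; apply: funext => n; rewrite /fadd addrC. Qed.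
Lemma fadd0 : left_id fzero fadd.
Proof. by move=> f; apply: funext => n; rewrite /fadd add0r. Qed.
Lemma faddN : left_inverse fzero fopp fadd.
Proof. by move=> f; apply: funext => n; rewrite /fadd /fopp addNr. Qed.
HB.instance Definition _ := GRing.isZmodule.Build fps faddA faddC fadd0 faddN.

Definition tr (n : nat) (f : fps) : {poly int} := \poly_(i < n.+1) f i.

Lemma smul_tr n m (f g : fps) : (m <= n)%N -> smul f g m = (tr n f * tr n g)`_m.
Proof.
move=> le; rewrite coefM /smul; apply: eq_bigr => i _.
rewrite /tr !coef_poly; have hi : (i < n.+1)%N by have := ltn_ord i; lia.
rewrite hi; have -> // : ((m - i) < n.+1)%N by lia.
Qed.


Lemma smulA : associative smul.
Proof.
move=> f g h; apply: funext => n.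
rewrite (@smul_tr n) // [RHS](@smul_tr n) //.
have -> : tr n (smul f g) = \poly_(i < n.+1) (tr n f * tr n g)`_i.
  by apply/polyP => i; rewrite !coef_poly; case: ifP => // hi; rewrite (@smul_tr n) //; lia.
have -> : tr n (smul g h) = \poly_(i < n.+1) (tr n g * tr n h)`_i.
  by apply/polyP => i; rewrite !coef_poly; case: ifP => // hi; rewrite (@smul_tr n) //; lia.
rewrite !coefM.
under eq_bigr => i _ do rewrite coef_poly (_ : (n - i < n.+1)%N) ?ltnS ?leq_subr //.
under [RHS]eq_bigr => i _ do rewrite coef_poly ltn_ord.
by rewrite -!coefM mulrA.
Qed.

Lemma smulC : commutative smul.
Proof. by move=> f g; apply: funext => n; rewrite !(@smul_tr n) // mulrC. Qed.

Lemma smul1 : left_id sone smul.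
Proof.
move=> f; apply: funext => n; rewrite /smul big_ord_recl /sone /= mul1r subn0.
by rewrite big1 ?addr0 // => i _; rewrite mul0r.
Qed.

Lemma smulDl : left_distributive smul fadd.
Proof.
move=> f g h; apply: funext => n; rewrite /smul /fadd -big_split /=.
by apply: eq_bigr => i _; rewrite mulrDl.
Qed.

Lemma sone_neq0 : sone != fzero.
Proof. apply/eqP => /(congr1 (fun f => f 0%N)); rewrite /sone /fzero /=. done. Qed.

HB.instance Definition _ := GRing.Zmodule_isComNzRing.Build fps smulA smulC smul1 smulDl sone_neq0.

Lemma mulE (f g : fps) : f * g = smul f g. Proof. by []. Qed.
Lemma addE (f g : fps) n : (f + g) n = f n + g n. Proof. by []. Qed.
Lemma oppE (f : fps) n : (- f) n = - f n. Proof. by []. Qed.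
Lemma zeroE n : (0 : fps) n = 0. Proof. by []. Qed.
Lemma oneE n : (1 : fps) n = (n == 0%N)%:R. Proof. by []. Qed.
Lemma spowE (f : fps) k : spow f k = f ^+ k.
Proof. elim: k => // k IH; rewrite exprS -IH /=. done. Qed.

Goal forall a b : fps, (a + b) ^+ 2 = a ^+ 2 + 2%:R * a * b + b ^+ 2.
Proof. move=> a b; ring. Qed.

Definition rep n (f : fps) (p : {poly int}) := forall i, (i <= n)%N -> f i = p`_i.

Lemma rep_tr n f : rep n f (tr n f).
Proof. by move=> i hi; rewrite /tr coef_poly ltnS hi. Qed.

Lemma rep_mul n f g p q : rep n f p -> rep n g q -> rep n (f * g) (p * q).
Proof.
move=> hf hg i hi; rewrite mulE /smul coefM; apply: eq_bigr => j _.
have hj : (j <= n)%N by have := ltn_ord j; lia.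
by rewrite hf // hg //; lia.
Qed.
Lemma rep_add n f g p q : rep n f p -> rep n g q -> rep n (f + g) (p + q).
Proof. by move=> hf hg i hi; rewrite addE coefD hf ?hg. Qed.
Lemma rep_opp n f p : rep n f p -> rep n (- f) (- p).
Proof. by move=> hf i hi; rewrite oppE coefN hf. Qed.
Lemma rep_sub n f g p q : rep n f p -> rep n g q -> rep n (f - g) (p - q).
Proof. by move=> hf hg; apply: rep_add => //; apply: rep_opp. Qed.
Lemma rep_one n : rep n 1 1.
Proof. by move=> i _; rewrite coefC; case: i. Qed.
Lemma rep_exp n f p k : rep n f p -> rep n (f ^+ k) (p ^+ k).
Proof. move=> h; elim: k => [|k IH]. exact: rep_one. by rewrite !exprS; apply: rep_mul. Qed.

Lemma fps_ext (f g : fps) : (forall n, exists p, rep n f p /\ rep n g p) -> f = g.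
Proof. move=> h; apply: funext => n; have [p [h1 h2]] := h n; by rewrite h1 // h2. Qed.

Definition xs : fps := fun n => (n == 1%N)%:R.
Lemma rep_x n : rep n xs 'X.
Proof. by move=> i _; rewrite coefX. Qed.
Lemma rep_xn n k : rep n (xs ^+ k) 'X^k.
Proof. by apply: rep_exp; apply: rep_x. Qed.
Lemma xnE k n : (xs ^+ k) n = (n == k)%:R.
Proof. by rewrite (@rep_xn n k n (leqnn n)) coefXn. Qed.

Lemma xnM k (h : fps) n : (xs ^+ k * h) n = if (n < k)%N then 0 else h (n - k)%N.
Proof.
rewrite (rep_mul (@rep_xn n k) (@rep_tr n h) (leqnn n)) coefXnM.
case: ifP => // hn; rewrite coef_poly; have -> : (n - k < n.+1)%N by lia. done.
Qed.

Definition ps (p : {poly int}) : fps := fun n => p`_n.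
Lemma rep_ps n p : rep n (ps p) p. Proof. by []. Qed.

Definition V (f : fps) : fps := fun n => if (3 %| n)%N then f (n %/ 3)%N else 0.
Lemma rep_V n f p : rep n f p -> rep n (V f) (p \Po 'X^3).
Proof.
move=> h i hi; rewrite /V coef_comp_poly_Xn //; case: ifP => // _; apply: h.
by apply: leq_trans hi; apply: leq_div.
Qed.

Lemma VM f g : V (f * g) = V f * V g.
Proof.
apply: fps_ext => n; exists ((tr n f * tr n g) \Po 'X^3); split.
  by apply: rep_V; apply: rep_mul; apply: rep_tr.
by rewrite comp_polyM; apply: rep_mul; apply: rep_V; apply: rep_tr.
Qed.
Lemma VD f g : V (f + g) = V f + V g.
Proof. apply: funext => n; rewrite /V !addE; case: ifP => //; by rewrite addr0. Qed.
Lemma VN f : V (- f) = - V f.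
Proof. apply: funext => n; rewrite /V !oppE; case: ifP => //; by rewrite oppr0. Qed.
Lemma VB f g : V (f - g) = V f - V g.
Proof. by rewrite VD VN. Qed.
Lemma V1 : V 1 = 1.
Proof.
apply: funext => n; rewrite /V; case: n => [|n] //; case: ifP => // h.
have : (0 < n.+1 %/ 3)%N by rewrite divn_gt0 //; apply: dvdn_leq.
by case: (n.+1 %/ 3)%N.
Qed.

Lemma Vx : V xs = xs ^+ 3.
Proof.
apply: fps_ext => n; exists ('X^3); split; last exact: rep_xn.
by rewrite -(comp_polyX ('X^3 : {poly int})); apply: rep_V; apply: rep_x.
Qed.

Lemma VX k : V (xs ^+ k) = xs ^+ (3 * k).
Proof. elim: k => [|k IH]; first by rewrite V1. by rewrite exprS VM IH Vx -exprD mulnS. Qed.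

Definition D (j : nat) (f : fps) : fps := fun m => f (3 * m + j)%N.

Lemma xM (h : fps) n : (xs * h) n = if n is n'.+1 then h n' else 0.
Proof. by rewrite -(expr1 xs) xnM; case: n => //= n; rewrite subn1. Qed.
Lemma x2M (h : fps) n : (xs ^+ 2 * h) n = if n is n'.+2 then h n' else 0.
Proof. by rewrite xnM; case: n => [|[|n]] //=; rewrite subn2. Qed.

Lemma VE g n : V g n = if (n %% 3 == 0)%N then g (n %/ 3)%N else 0.
Proof. by rewrite /V /dvdn. Qed.

Lemma dissect f : f = V (D 0 f) + xs * V (D 1 f) + xs ^+ 2 * V (D 2 f).
Proof.
apply: funext => n; rewrite !addE xM x2M !VE /D.
case: n => [|[|n]] /=; rewrite ?mod0n ?div0n ?muln0 ?addn0 //= ?addr0 ?add0r //.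
have := ltn_pmod n.+2 (isT : (0 < 3)%N).
have e := divn_eq n.+2 3.
case H : (n.+2 %% 3)%N => [|[|[|r]]] // _; rewrite ?eqxx.
- have h1 : (n.+1 %% 3 == 0)%N = false by apply/negbTE; lia.
  have h2 : (n %% 3 == 0)%N = false by apply/negbTE; lia.
  rewrite !VE h1 h2 !addr0; congr f; lia.
- have h1 : (n.+1 %% 3 == 0)%N = true by apply/eqP; lia.
  have h2 : (n %% 3 == 0)%N = false by apply/negbTE; lia.
  rewrite !VE h1 h2 /= add0r addr0; congr f; lia.
- have h1 : (n.+1 %% 3 == 0)%N = false by apply/negbTE; lia.
  have h2 : (n %% 3 == 0)%N = true by apply/eqP; lia.
  rewrite !VE h1 h2 /= add0r; congr f; lia.
Qed.

Lemma Vnz g n : (n %% 3 != 0)%N -> V g n = 0.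
Proof. by rewrite VE => /negbTE ->. Qed.
Lemma V3 g m : V g (3 * m)%N = g m.
Proof. rewrite VE (_ : (3 * m) %% 3 = 0)%N; last lia. by rewrite eqxx mulKn. Qed.
Lemma V3' g m n : n = (3 * m)%N -> V g n = g m.
Proof. by move=> ->; apply: V3. Qed.

Lemma DD j f g : D j (f + g) = D j f + D j g. Proof. by []. Qed.

Lemma D0c (a b c : fps) : D 0 (V a + xs * V b + xs ^+ 2 * V c) = a.
Proof.
apply: funext => m; rewrite /D !addE -(expr1 xs) !xnM addn0 V3.
case: ifP => h; case: ifP => h2; rewrite ?addr0 //; try lia.
all: rewrite !Vnz ?addr0 //; lia.
Qed.
Lemma D1c (a b c : fps) : D 1 (V a + xs * V b + xs ^+ 2 * V c) = b.
Proof.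
apply: funext => m; rewrite /D !addE -(expr1 xs) !xnM.
rewrite ifF; last lia. rewrite (@V3' b m); last lia.
rewrite Vnz; last lia. case: ifP => h; rewrite ?addr0 ?add0r //.
rewrite Vnz ?add0r //; lia.
Qed.
Lemma D2c (a b c : fps) : D 2 (V a + xs * V b + xs ^+ 2 * V c) = c.
Proof.
apply: funext => m; rewrite /D !addE -(expr1 xs) !xnM.
rewrite ifF; last lia. rewrite ifF; last lia. rewrite (@V3' c m); last lia.
rewrite !Vnz ?add0r //; lia.
Qed.

Lemma prod_comb (f g : fps) :
  f * g = V (D 0 f * D 0 g + xs * (D 1 f * D 2 g + D 2 f * D 1 g))
        + xs * V (D 0 f * D 1 g + D 1 f * D 0 g + xs * (D 2 f * D 2 g))
        + xs ^+ 2 * V (D 0 f * D 2 g + D 1 f * D 1 g + D 2 f * D 0 g).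
Proof.
rewrite {1}(dissect f) {1}(dissect g) !(VD, VM, Vx); ring.
Qed.

Lemma D0M (f g : fps) : D 0 (f * g) = D 0 f * D 0 g + xs * (D 1 f * D 2 g + D 2 f * D 1 g).
Proof. by rewrite {1}prod_comb D0c. Qed.
Lemma D1M (f g : fps) : D 1 (f * g) = D 0 f * D 1 g + D 1 f * D 0 g + xs * (D 2 f * D 2 g).
Proof. by rewrite {1}prod_comb D1c. Qed.
Lemma D2M (f g : fps) : D 2 (f * g) = D 0 f * D 2 g + D 1 f * D 1 g + D 2 f * D 0 g.
Proof. by rewrite {1}prod_comb D2c. Qed.

Definition Nm (f : fps) : fps :=
  D 0 f ^+ 3 + xs * D 1 f ^+ 3 + xs ^+ 2 * D 2 f ^+ 3 - 3%:R * xs * (D 0 f * D 1 f * D 2 f).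

Lemma NmM (f g : fps) : Nm (f * g) = Nm f * Nm g.
Proof. rewrite /Nm D0M D1M D2M; ring. Qed.

Lemma V0 : V 0 = 0.
Proof. by apply: funext => n; rewrite /V; case: ifP. Qed.

Lemma Nm_comb (a b c : fps) : Nm (V a + xs * V b + xs ^+ 2 * V c) =
  a ^+ 3 + xs * b ^+ 3 + xs ^+ 2 * c ^+ 3 - 3%:R * xs * (a * b * c).
Proof. by rewrite /Nm D0c D1c D2c. Qed.

Lemma Nm_factor n : Nm (1 - xs ^+ n) =
  if (3 %| n)%N then (1 - xs ^+ (n %/ 3)) ^+ 3 else 1 - xs ^+ n.
Proof.
have e := divn_eq n 3; set a := (n %/ 3)%N in e *.
have := ltn_pmod n (isT : (0 < 3)%N).
case H : (n %% 3)%N => [|[|[|r]]] // _; rewrite H in e.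
- have -> : (3 %| n)%N by rewrite /dvdn H.
  have -> : Nm (1 - xs ^+ n) = Nm (V (1 - xs ^+ a) + xs * V 0 + xs ^+ 2 * V 0).
    by congr Nm; rewrite V0 VB V1 VX e addn0 mulnC; ring.
  by rewrite Nm_comb; ring.
- have -> : (3 %| n)%N = false by rewrite /dvdn H.
  have -> : Nm (1 - xs ^+ n) = Nm (V 1 + xs * V (- xs ^+ a) + xs ^+ 2 * V 0).
    by congr Nm; rewrite V0 VN V1 VX e mulnC addn1 exprS; ring.
  rewrite Nm_comb e addn1 (exprS xs (a * 3)%N) exprM; ring.
- have -> : (3 %| n)%N = false by rewrite /dvdn H.
  have -> : Nm (1 - xs ^+ n) = Nm (V 1 + xs * V 0 + xs ^+ 2 * V (- xs ^+ a)).
    by congr Nm; rewrite V0 VN V1 VX e mulnC exprD; ring.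
  rewrite Nm_comb e (exprD xs (a * 3)%N) exprM; ring.
Qed.

Definition eqm M (f g : fps) := forall n, (n < M)%N -> f n = g n.

Lemma eqm_refl M f : eqm M f f. Proof. by []. Qed.
Lemma eqm_sym M f g : eqm M f g -> eqm M g f. Proof. by move=> h n hn; rewrite h. Qed.
Lemma eqm_trans M f g h : eqm M f g -> eqm M g h -> eqm M f h.
Proof. by move=> h1 h2 n hn; rewrite h1 ?h2. Qed.
Lemma eqm_le M N f g : (N <= M)%N -> eqm M f g -> eqm N f g.
Proof. by move=> le h n hn; apply: h; apply: leq_trans le. Qed.
Lemma eqm_add M f f' g g' : eqm M f f' -> eqm M g g' -> eqm M (f + g) (f' + g').
Proof. by move=> h1 h2 n hn; rewrite !addE h1 ?h2. Qed.
Lemma eqm_opp M f f' : eqm M f f' -> eqm M (- f) (- f').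
Proof. by move=> h1 n hn; rewrite !oppE h1. Qed.
Lemma eqm_sub M f f' g g' : eqm M f f' -> eqm M g g' -> eqm M (f - g) (f' - g').
Proof. by move=> h1 h2; apply: eqm_add => //; apply: eqm_opp. Qed.
Lemma eqm_mul M f f' g g' : eqm M f f' -> eqm M g g' -> eqm M (f * g) (f' * g').
Proof.
move=> h1 h2 n hn; rewrite !mulE /smul; apply: eq_bigr => i _.
have hi := ltn_ord i; rewrite h1 ?h2 //; lia.
Qed.
Lemma eqm_exp M f f' k : eqm M f f' -> eqm M (f ^+ k) (f' ^+ k).
Proof. by move=> h; elim: k => // k IH; rewrite !exprS; apply: eqm_mul. Qed.
Lemma eqm_D M j f g : (j < 3)%N -> eqm (3 * M) f g -> eqm M (D j f) (D j g).
Proof. by move=> hj h n hn; rewrite /D h //; lia. Qed.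
Lemma eqm_Nm M f g : eqm (3 * M) f g -> eqm M (Nm f) (Nm g).
Proof.
move=> h; have h0 := eqm_D (isT : (0 < 3)%N) h; have h1 := eqm_D (isT : (1 < 3)%N) h;
have h2 := eqm_D (isT : (2 < 3)%N) h.
rewrite /Nm; repeat (apply: eqm_add || apply: eqm_opp || apply: eqm_sub || apply: eqm_mul || apply: eqm_exp
  || apply: eqm_refl || eassumption).
Qed.
Lemma eqm_all f g : (forall M, eqm M f g) -> f = g.
Proof. by move=> h; apply: funext => n; apply: (h n.+1). Qed.

Lemma eqm_xn M k : (M <= k)%N -> eqm M (xs ^+ k) 0.
Proof. by move=> hk n hn; rewrite xnE zeroE; case: eqP => //; lia. Qed.

Definition Pm m K : fps := \prod_(1 <= k < K.+1) (1 - xs ^+ (m * k)).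

Lemma rep_Pm n m K : rep n (Pm m K) (\prod_(1 <= k < K.+1) (1 - 'X^(m * k)) : {poly int}).
Proof.
apply: (big_ind2 (fun f p => rep n f p)); first exact: rep_one.
  by move=> *; apply: rep_mul.
by move=> i _; apply: rep_sub; [apply: rep_one | apply: rep_xn].
Qed.

Lemma PmS m K : Pm m K.+1 = Pm m K * (1 - xs ^+ (m * K.+1)).
Proof. by rewrite /Pm big_nat_recr. Qed.

Lemma Pm_stable m n K : (0 < m)%N -> (n <= K)%N -> eqm n.+1 (Pm m K) (Pm m n).
Proof.
move=> hm; elim: K => [|K IH] hK.
  by have -> : n = 0%N by lia.
case: (ltnP n K.+1) => h; last by have -> : n = K.+1 by lia.
rewrite PmS; apply: eqm_trans (IH _) ; last lia.
rewrite -[X in eqm _ _ X]mulr1; apply: eqm_mul => //.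
rewrite -[X in eqm _ _ X]subr0; apply: eqm_sub => //; apply: eqm_xn; nia.
Qed.

Lemma Eser_Pm m K : (0 < m)%N -> eqm K.+1 (Eser m) (Pm m K).
Proof.
move=> hm i hi; have -> : Eser m i = Pm m i i by rewrite (@rep_Pm i m i i).
by rewrite (Pm_stable hm (_ : i <= K)%N).
Qed.

Lemma Nm1 : Nm 1 = 1.
Proof.
have E : Nm 1 = Nm (V 1 + xs * V 0 + xs ^+ 2 * V 0) by rewrite V0 V1; congr Nm; ring.
by rewrite E Nm_comb; ring.
Qed.

Lemma Nm_Pm m K : (0 < m)%N -> ~~ (3 %| m)%N ->
  Nm (Pm m (3 * K)) * Pm (3 * m) K = Pm m K ^+ 3 * Pm m (3 * K).
Proof.
move=> hm h3; elim: K => [|K IH].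
  by rewrite muln0 /Pm !big_geq // Nm1; ring.
have e : (3 * K.+1 = (3 * K).+1.+1.+1)%N by lia.
rewrite e !PmS !NmM.
rewrite !Nm_factor.
have d1 : (3 %| m * (3 * K).+1)%N = false.
  by apply/negbTE; rewrite Euclid_dvdM // negb_or h3 /=; apply/negP; lia.
have d2 : (3 %| m * (3 * K).+2)%N = false.
  by apply/negbTE; rewrite Euclid_dvdM // negb_or h3 /=; apply/negP; lia.
have d3 : (3 %| m * (3 * K).+3)%N by apply: dvdn_mull; apply/dvdnP; exists K.+1; lia.
rewrite d1 d2 d3.
have -> : (m * (3 * K).+3 %/ 3 = m * K.+1)%N.
  by rewrite (_ : (m * (3 * K).+3 = (m * K.+1) * 3)%N) ?mulnK //; lia.
have -> : (3 * m * K.+1 = m * (3 * K).+3)%N by lia.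
rewrite -e.
transitivity (Nm (Pm m (3 * K)) * Pm (3 * m) K * ((1 - xs ^+ (m * (3 * K).+1)) *
   (1 - xs ^+ (m * (3 * K).+2)) * (1 - xs ^+ (m * K.+1)) ^+ 3 * (1 - xs ^+ (m * (3 * K).+3)))).
  by rewrite e; ring.
by rewrite IH e; ring.
Qed.

Lemma NmE m : (0 < m)%N -> ~~ (3 %| m)%N -> Nm (Eser m) * (Eser (3 * m) : fps) = (Eser m : fps) ^+ 4.
Proof.
move=> hm h3; apply: eqm_all => M.
have h1 : eqm M (Nm (Eser m)) (Nm (Pm m (3 * M))).
  by apply: eqm_Nm; apply: (eqm_le (leqnSn _) (@Eser_Pm m (3 * M) hm)).
have h2 : eqm M (Eser (3 * m)) (Pm (3 * m) M).
  by apply: (eqm_le (leqnSn _) (@Eser_Pm (3 * m) M _)); rewrite muln_gt0.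
have h3' : eqm M (Eser m) (Pm m M) by apply: (eqm_le (leqnSn _) (@Eser_Pm m M hm)).
have h4 : eqm M (Eser m) (Pm m (3 * M)).
  by apply: (eqm_le _ (@Eser_Pm m (3 * M) hm)); lia.
apply: eqm_trans (eqm_mul h1 h2) _.
rewrite Nm_Pm // (exprS _ 3) mulrC.
by apply: eqm_sym; apply: eqm_mul; [|apply: eqm_exp].
Qed.

Fixpoint c (N j : nat) {struct N} : fps :=
  match N with
  | 0 => if j == 0%N then 1 else 0
  | N'.+1 => (if j is j'.+1 then c N' j' else 0) * (1 + xs ^+ (4 * N' + 2))
       + xs ^+ (2 * N' + 1) * (c N' j + (if j is j''.+2 then c N' j'' else 0))
  end.

Definition c1 N j := if j is j'.+1 then c N j' else 0.
Definition c2 N j := if j is j'.+2 then c N j' else 0.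
Lemma cS N j : c N.+1 j = c1 N j * (1 + xs ^+ (4 * N + 2)) + xs ^+ (2 * N + 1) * (c N j + c2 N j).
Proof. by []. Qed.

Lemma c_zero N j : (2 * N < j)%N -> c N j = 0.
Proof.
elim: N j => [|N IH] j hj /=; first by case: j hj.
case: j hj => [|j] hj; first lia.
rewrite IH; last lia. rewrite IH; last lia.
case: j hj => [|j] hj; first lia.
by rewrite IH ?mul0r ?add0r ?addr0 ?mulr0 //; lia.
Qed.

Definition O n : fps := \prod_(i < n) (1 - xs ^+ (2 * i + 1)).

Lemma sum_c N L : (2 * N < L)%N ->
  \sum_(j < L) (-1) ^+ j * c N j = (-1) ^+ N * O N ^+ 2.
Proof.
elim: N L => [|N IH] L hL.
  case: L hL => [|L] // _; rewrite big_ord_recl /= big1 ?addr0 /O ?big_ord0 ?expr1n ?mulr1 //.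
  by move=> i _; rewrite /= mulr0.
case: L hL => [|[|L]] hL; try lia.
set A := 1 + xs ^+ (4 * N + 2); set B := xs ^+ (2 * N + 1).
rewrite (eq_bigr (fun j : 'I_L.+2 => A * ((-1) ^+ j * c1 N j) + B * ((-1) ^+ j * c N j)
   + B * ((-1) ^+ j * c2 N j))); last by move=> j _; rewrite cS -/A -/B; ring.
rewrite !big_split /= -!mulr_sumr.
rewrite big_ord_recl /= mulr0 add0r.
have s1 : \sum_(i < L.+1) (-1) ^+ (bump 0 i) * (c1 N (bump 0 i)) = - ((-1) ^+ N * O N ^+ 2).
  rewrite -(IH L.+1); last lia. rewrite -sumrN; apply: eq_bigr => i _; rewrite /bump /= add1n exprS; ring.
have s2 : \sum_(i < L.+2) (-1) ^+ i * c N i = (-1) ^+ N * O N ^+ 2 by apply: IH; lia.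
have s3 : \sum_(i < L.+2) (-1) ^+ i * c2 N i = (-1) ^+ N * O N ^+ 2.
  rewrite big_ord_recl /= mulr0 add0r big_ord_recl /= mulr0 add0r -(IH L); last lia.
  by apply: eq_bigr => i _; rewrite /bump /= !add1n !exprS; ring.
rewrite s1 s2 s3 /O big_ord_recr /= (exprS (-1 : fps) N) /A /B.
have -> : (4 * N + 2 = (2 * N + 1) * 2)%N by lia.
rewrite exprM; ring.
Qed.

Notation Q := (Pm 2).

Lemma xsE e1 e2 : e1 = e2 -> xs ^+ e1 = xs ^+ e2. Proof. by move->. Qed.

Definition phi1 N j m : fps := xs ^+ ((j.-1) * (j.-1) + 2 * N + 2 * j) * (1 - xs ^+ (2 * j)) * (1 - xs ^+ (2 * m)).
Definition phi2 (N j m : nat) : fps := xs ^+ (j * j + 2 * j) * (1 - xs ^+ (2 * m.-1)) * (1 - xs ^+ (2 * m)).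
Definition phi3 N j (m : nat) : fps := xs ^+ ((j.-2) * (j.-2) + 4 * N + 2 * j) * (1 - xs ^+ (2 * j.-1)) * (1 - xs ^+ (2 * j)).


Lemma piece1 (N : nat) (IH : forall i m, (i + m = 2 * N)%N -> c N i * Q i * Q m * xs ^+ (2 * N * i) = xs ^+ (N * N + i * i) * Q (2 * N)) j m : (j + m = 2 * N + 2)%N ->
  c1 N j * Q j * Q m * xs ^+ (2 * N.+1 * j) = xs ^+ (N * N) * Q (2 * N) * phi1 N j m.
Proof.
move=> e; rewrite /phi1.
case: j e => [|j] e; first by rewrite /c1 muln0 expr0; ring.
case: m e => [|m] e.
  rewrite /c1 c_zero /=; last lia. by rewrite muln0 expr0; ring.
rewrite /c1 !PmS.
have hjm : (j + m = 2 * N)%N by lia.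
have h := IH _ _ hjm.
have -> : (2 * N.+1 * j.+1 = 2 * N * j + (2 * N + 2 * j + 2))%N by nia.
rewrite exprD.
transitivity ((c N j * Q j * Q m * xs ^+ (2 * N * j)) * ((1 - xs ^+ (2 * j.+1)) * (1 - xs ^+ (2 * m.+1))
   * xs ^+ (2 * N + 2 * j + 2))); first ring.
rewrite h /=.
rewrite exprD (xsE (_ : (j * j + 2 * N + 2 * j.+1 = j * j + (2 * N + 2 * j + 2))%N)); last lia.
rewrite !mulnS !exprD; ring.
Qed.

Lemma piece2 (N : nat) (IH : forall i m, (i + m = 2 * N)%N -> c N i * Q i * Q m * xs ^+ (2 * N * i) = xs ^+ (N * N + i * i) * Q (2 * N)) j m : (j + m = 2 * N + 2)%N ->
  c N j * Q j * Q m * xs ^+ (2 * N.+1 * j) = xs ^+ (N * N) * Q (2 * N) * phi2 N j m.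
Proof.
move=> e; rewrite /phi2.
case: m e => [|[|m]] e.
- rewrite c_zero /=; last lia. by rewrite muln0 expr0; ring.
- rewrite c_zero /=; last lia. by rewrite muln0 expr0; ring.
rewrite !PmS.
have hjm : (j + m = 2 * N)%N by lia.
have h := IH _ _ hjm.
have -> : (2 * N.+1 * j = 2 * N * j + 2 * j)%N by nia.
rewrite exprD.
transitivity ((c N j * Q j * Q m * xs ^+ (2 * N * j)) * ((1 - xs ^+ (2 * m.+1)) * (1 - xs ^+ (2 * m.+2))
   * xs ^+ (2 * j))); first ring.
by rewrite h /= !mulnS !exprD; ring.
Qed.

Lemma piece3 (N : nat) (IH : forall i m, (i + m = 2 * N)%N -> c N i * Q i * Q m * xs ^+ (2 * N * i) = xs ^+ (N * N + i * i) * Q (2 * N)) j m : (j + m = 2 * N + 2)%N ->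
  c2 N j * Q j * Q m * xs ^+ (2 * N.+1 * j) = xs ^+ (N * N) * Q (2 * N) * phi3 N j m.
Proof.
move=> e; rewrite /phi3.
case: j e => [|[|j]] e.
- by rewrite /c2 muln0 expr0; ring.
- by rewrite /c2 muln0 expr0; ring.
rewrite /c2 !PmS.
have hjm : (j + m = 2 * N)%N by lia.
have h := IH _ _ hjm.
have -> : (2 * N.+1 * j.+2 = 2 * N * j + (4 * N + 2 * j + 4))%N by nia.
rewrite exprD.
transitivity ((c N j * Q j * Q m * xs ^+ (2 * N * j)) * ((1 - xs ^+ (2 * j.+1)) * (1 - xs ^+ (2 * j.+2))
   * xs ^+ (4 * N + 2 * j + 4))); first ring.
rewrite h /= (xsE (_ : (j * j + 4 * N + 2 * j.+2 = j * j + (4 * N + 2 * j + 4))%N)); last lia.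
by rewrite !mulnS !exprD; ring.
Qed.


Ltac xnorm := rewrite ?(mulSn, mulnS, mul0n, muln0, mulnDl, mulnDr, addn0, add0n, addSn, addnS);
  rewrite ?(exprS, exprD, expr0).

Lemma claim4 N j m : (j + m = 2 * N + 2)%N ->
  (1 + xs ^+ (4 * N + 2)) * phi1 N j m + xs ^+ (2 * N + 1) * (phi2 N j m + phi3 N j m)
  = xs ^+ (2 * N + 1 + j * j) * ((1 - xs ^+ (2 * (2 * N + 1))) * (1 - xs ^+ (2 * (2 * N + 2)))).
Proof.
rewrite /phi1 /phi2 /phi3.
case: j => [|[|a]] e /=.
- have -> : m = (2 * N + 2)%N by lia.
  xnorm; ring.
- have -> : m = (2 * N + 1)%N by lia.
  xnorm; ring.
case: m e => [|[|b]] e /=.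
- have -> : (4 * N = 2 * a)%N by lia.
  have -> : (2 * N = a)%N by lia.
  xnorm; ring.
- have -> : (4 * N = 2 * a + 2)%N by lia.
  have -> : (2 * N = a + 1)%N by lia.
  xnorm; ring.
have -> : (4 * N = 2 * a + 2 * b + 4)%N by lia.
have -> : (2 * N = a + b + 2)%N by lia.
xnorm; ring.
Qed.


Lemma Q0 : Q 0 = 1. Proof. by rewrite /Pm big_geq. Qed.

Lemma Q2S N : Q (2 * N.+1) = Q (2 * N) * ((1 - xs ^+ (2 * (2 * N + 1))) * (1 - xs ^+ (2 * (2 * N + 2)))).
Proof.
have -> : (2 * N.+1 = (2 * N).+2)%N by lia.
rewrite !PmS mulrA; congr (_ * (1 - _) * (1 - _)); congr (xs ^+ _); lia.
Qed.

Lemma cQ N i m : (i + m = 2 * N)%N ->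
  c N i * Q i * Q m * xs ^+ (2 * N * i) = xs ^+ (N * N + i * i) * Q (2 * N).
Proof.
elim: N i m => [|N IH] i m e.
  have -> : i = 0%N by lia. have -> : m = 0%N by lia.
  rewrite /= !muln0 Q0 expr0; ring.
have e' : (i + m = 2 * N + 2)%N by lia.
transitivity ((1 + xs ^+ (4 * N + 2)) * (c1 N i * Q i * Q m * xs ^+ (2 * N.+1 * i))
  + xs ^+ (2 * N + 1) * (c N i * Q i * Q m * xs ^+ (2 * N.+1 * i)
                        + c2 N i * Q i * Q m * xs ^+ (2 * N.+1 * i))).
  rewrite cS; move: (xs ^+ (4 * N + 2)) (xs ^+ (2 * N + 1)) (xs ^+ (2 * N.+1 * i)) => A B X; ring.
rewrite (piece1 IH e') (piece2 IH e') (piece3 IH e').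
transitivity (xs ^+ (N * N) * Q (2 * N) * ((1 + xs ^+ (4 * N + 2)) * phi1 N i m
   + xs ^+ (2 * N + 1) * (phi2 N i m + phi3 N i m))).
  by move: (xs ^+ (4 * N + 2)) (xs ^+ (2 * N + 1)) => A B; ring.
rewrite claim4 // Q2S (xsE (_ : (N.+1 * N.+1 + i * i = N * N + (2 * N + 1 + i * i))%N)); last nia.
rewrite (exprD xs (N * N)); move: (xs ^+ (2 * N + 1 + i * i)) (xs ^+ (2 * (2 * N + 1))) (xs ^+ (2 * (2 * N + 2))) => A B C; ring.
Qed.

Lemma eqm0_mul a b (f g : fps) : eqm a f 0 -> eqm b g 0 -> eqm (a + b) (f * g) 0.
Proof.
move=> hf hg n hn; rewrite mulE /smul zeroE big1 // => i _.
have hi := ltn_ord i.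
case: (ltnP i a) => h1; first by rewrite hf // zeroE mul0r.
by rewrite hg ?zeroE ?mulr0 //; lia.
Qed.

Lemma eqm0_exp a (g : fps) k : eqm a g 0 -> eqm (a * k) (g ^+ k) 0.
Proof.
move=> h; elim: k => [|k IH]; first by move=> n; rewrite muln0.
by rewrite exprS mulnS; apply: eqm0_mul.
Qed.

Lemma eqm0_sum M I (r : seq I) (P : pred I) (F : I -> fps) :
  (forall i, P i -> eqm M (F i) 0) -> eqm M (\sum_(i <- r | P i) F i) 0.
Proof.
move=> h; apply: (big_ind (fun f => eqm M f 0)) => //.
by move=> f g h1 h2; rewrite -[0]addr0; apply: eqm_add.
Qed.

Lemma sumE I (r : seq I) (P : pred I) (F : I -> fps) n :
  (\sum_(i <- r | P i) F i) n = \sum_(i <- r | P i) F i n.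
Proof.
by apply: (big_ind2 (fun (f : fps) (a : int) => f n = a)) => // f a g b h1 h2; rewrite addE h1 h2.
Qed.

Lemma telescope (g : fps) L : (1 - g) * \sum_(j < L) g ^+ j = 1 - g ^+ L.
Proof.
elim: L => [|L IH]; first by rewrite big_ord0 expr0; ring.
rewrite big_ord_recr /= mulrDr IH exprS; ring.
Qed.

Lemma sinvK (f : fps) : f 0%N = 1 -> f * (sinv f : fps) = 1.
Proof.
move=> f0; set g : fps := 1 - f.
have g0 : eqm 1 g 0 by move=> n; case: n => // _; rewrite /g addE oppE f0 zeroE oneE subrr.
have hs : forall n, sinv f n = (\sum_(j < n.+1) g ^+ j) n.
  by move=> n; rewrite sumE /sinv; apply: eq_bigr => j _; rewrite spowE.
have ord j : eqm j (g ^+ j) 0 by have := @eqm0_exp 1 g j g0; rewrite mul1n.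
apply: eqm_all => L.
have e1 : eqm L (sinv f) (\sum_(j < L) g ^+ j).
  move=> n hn; rewrite hs.
  rewrite -(subnKC hn) big_split_ord /= addE.
  have -> : (\sum_(i < L - n.+1) g ^+ (n.+1 + i)) n = 0.
    rewrite sumE big1 // => i _; apply: ord; lia.
  by rewrite addr0.
apply: (eqm_trans (eqm_mul (@eqm_refl L f) e1)).
have -> : f = 1 - g by rewrite /g; ring.
rewrite telescope.
by rewrite -[X in eqm _ _ X]subr0; apply: eqm_sub => //; apply: ord.
Qed.

Definition cw k : fps := if k == 0%N then 1 else 2%:R * (-1) ^+ k.
Definition wint k : int := if k == 0%N then 1 else 2 * (-1) ^+ k.
Definition thN N : fps := \sum_(k < N.+1) cw k * xs ^+ (k * k).
Definition th : fps := fun n => thN n n.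

Lemma sign_coef k (h : fps) n : ((-1) ^+ k * h) n = (-1) ^+ k * h n.
Proof.
elim: k => [|k IH]; first by rewrite !expr0 !mul1r.
by rewrite !exprS -!mulrA mulN1r oppE IH mulN1r.
Qed.
Lemma two_coef (h : fps) n : (2%:R * h) n = 2 * h n.
Proof. by rewrite mulr2n mulrDl mul1r addE mulr2n mulrDl mul1r. Qed.
Lemma cw_coef k (h : fps) n : (cw k * h) n = wint k * h n.
Proof.
rewrite /cw /wint; case: ifP => _; first by rewrite !mul1r.
by rewrite -mulrA two_coef sign_coef mulrA.
Qed.

Lemma thN_coef N n : thN N n = \sum_(k < N.+1) wint k * (n == (k * k)%N)%:R.
Proof. by rewrite /thN sumE; apply: eq_bigr => k _; rewrite cw_coef xnE. Qed.

Lemma sq_inj a b : (a * a == b * b)%N = (a == b).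
Proof. by rewrite !mulnn eqn_exp2r. Qed.

Lemma sum_sq L n s : (s < L)%N -> n = (s * s)%N ->
  \sum_(k < L) wint k * (n == (k * k)%N)%:R = wint s.
Proof.
move=> hs ->; rewrite (bigD1 (Ordinal hs)) //= eqxx mulr1 big1 ?addr0 // => k hk.
have hk2 : (k : nat) != s by apply: contra hk => /eqP h; apply/eqP; apply: val_inj.
by rewrite eq_sym sq_inj (negbTE hk2) mulr0.
Qed.
Lemma sum_nsq L n : (forall s, n <> (s * s)%N) -> \sum_(k < L) wint k * (n == (k * k)%N)%:R = 0.
Proof. by move=> h; rewrite big1 // => k _; case: eqP => [e|]; [case: (h k e) | rewrite mulr0]. Qed.

Lemma thN_indep N N' n : (n <= N)%N -> (n <= N')%N -> thN N n = thN N' n.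
Proof.
move=> h1 h2; rewrite !thN_coef.
case: (pselect (exists s, n = (s * s)%N)) => [[s e]|ne].
  have hs : (s <= n)%N by rewrite e; case: s {e} => // s; rewrite leq_pmulr.
  by rewrite (@sum_sq _ _ s) ?(@sum_sq _ _ s) //; lia.
by rewrite !sum_nsq // => s e; apply: ne; exists s.
Qed.

Lemma th_stable M N : (M <= N.+1)%N -> eqm M th (thN N).
Proof. by move=> h n hn; rewrite /th (@thN_indep n N) //; lia. Qed.

Lemma th_sq s : th (s * s)%N = wint s.
Proof.
rewrite /th thN_coef (@sum_sq _ _ s) //; case: s => // s; rewrite ltnS leq_pmulr //.
Qed.
Lemma th_nsq n : (forall s, n <> (s * s)%N) -> th n = 0.
Proof. by move=> h; rewrite /th thN_coef sum_nsq. Qed.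

Definition dd N j := (((N - j) + (j - N)) * ((N - j) + (j - N)))%N.

Lemma sgn2 a : ((-1) ^+ a * (-1) ^+ a : fps) = 1.
Proof. by rewrite -exprMn mulrNN mulr1 expr1n. Qed.

Lemma stepB N : (-1) ^+ N * \sum_(j < (2 * N).+1) (-1) ^+ j * xs ^+ (dd N j) = thN N.
Proof.
rewrite (_ : (2 * N).+1 = (N + N.+1)%N); last lia.
rewrite big_split_ord /= big_ord_recl /= (reindex_inj rev_ord_inj) /=.
rewrite /thN big_ord_recl /= /cw /= mul1r.
have -> : dd N (N + 0)%N = 0%N by rewrite /dd; lia.
rewrite !mulrDr addn0 mulrA sgn2 mul1r expr0 addrCA; congr (_ + _).
rewrite !mulr_sumr -big_split /=; apply: eq_bigr => i _.
have hi := ltn_ord i.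
have d1 : dd N (N - i.+1) = (i.+1 * i.+1)%N.
  by rewrite /dd (_ : (N - (N - i.+1) + (N - i.+1 - N) = i.+1)%N) //; lia.
have d2 : dd N (N + bump 0 i) = (i.+1 * i.+1)%N.
  by rewrite /dd (_ : (N - (N + bump 0 i) + (N + bump 0 i - N) = i.+1)%N) //; rewrite /bump /=; lia.
rewrite d1 d2.
have s1 : ((-1) ^+ N * (-1) ^+ (N - i.+1) : fps) = (-1) ^+ i.+1.
  have eN : N = (N - i.+1 + i.+1)%N by lia.
  by rewrite {1}eN exprD mulrC mulrA sgn2 mul1r.
have s2 : ((-1) ^+ N * (-1) ^+ (N + bump 0 i) : fps) = (-1) ^+ i.+1.
  by rewrite exprD mulrA sgn2 mul1r /bump /= add1n.
transitivity (((-1) ^+ N * (-1) ^+ (N - i.+1)) * xs ^+ (i.+1 * i.+1) +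
              ((-1) ^+ N * (-1) ^+ (N + bump 0 i)) * xs ^+ (i.+1 * i.+1)).
  by rewrite !mulrA.
rewrite s1 s2; move: ((-1) ^+ i.+1 : fps) (xs ^+ (i.+1 * i.+1)) => A B.
rewrite /bump /=; ring.
Qed.

Lemma xcancel k (f g : fps) : xs ^+ k * f = xs ^+ k * g -> f = g.
Proof.
move=> E; apply: funext => n; have := congr1 (fun h : fps => h (n + k)%N) E.
have hk : (n + k < k)%N = false by lia.
by rewrite !xnM hk addnK.
Qed.

Lemma mul0coef (f g : fps) : (f * g) 0%N = f 0%N * g 0%N.
Proof. by rewrite mulE /smul big_ord1. Qed.

Lemma Pm0 m K : (0 < m)%N -> Pm m K 0%N = 1.
Proof.
move=> hm; elim: K => [|K IH]; first by rewrite /Pm big_geq.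
rewrite PmS mul0coef IH addE oppE xnE oneE (_ : (0 == m * K.+1)%N = false) ?subr0 ?mul1r //; apply/negbTE; rewrite eq_sym; nia.
Qed.

Lemma Eser0 m : Eser m 0%N = 1.
Proof. by rewrite /Eser big_geq // coef1. Qed.

Lemma eqm_sum M I (r : seq I) (P : pred I) (F G : I -> fps) :
  (forall i, P i -> eqm M (F i) (G i)) -> eqm M (\sum_(i <- r | P i) F i) (\sum_(i <- r | P i) G i).
Proof.
move=> h; apply: (big_ind2 (fun f g => eqm M f g)) => //.
by move=> *; apply: eqm_add.
Qed.

Lemma dd_eq N j : (N * N + j * j = 2 * N * j + dd N j)%N.
Proof.
rewrite /dd; case: (leqP j N) => h.
  have [t ->] : exists t, N = (j + t)%N by exists (N - j)%N; lia.
  rewrite (_ : (j + t - j = t)%N); last lia.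
  rewrite (_ : (j - (j + t) = 0)%N); last lia.
  rewrite addn0 !mulnDl !mulnDr; lia.
have [t ->] : exists t, j = (N + t)%N by exists (j - N)%N; lia.
rewrite (_ : (N + t - N = t)%N); last lia.
rewrite (_ : (N - (N + t) = 0)%N); last lia.
rewrite add0n !mulnDl !mulnDr; lia.
Qed.

Lemma stepC M N j : N = (2 * M)%N -> (j <= 2 * N)%N ->
  eqm M (c N j * (Eser 2 : fps)) (xs ^+ (dd N j)).
Proof.
move=> hN hj; set m := (2 * N - j)%N.
have e : (j + m = 2 * N)%N by rewrite /m; lia.
have h := cQ e; rewrite dd_eq exprD in h.
have h' : c N j * (Q j * Q m) = xs ^+ (dd N j) * Q (2 * N).
  apply: (@xcancel (2 * N * j)); transitivity (c N j * Q j * Q m * xs ^+ (2 * N * j)); first ring.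
  rewrite h; ring.
have Q1 : (Q j * Q m) 0%N = 1 by rewrite mul0coef !Pm0 ?mulr1.
have E1 : (Eser 2 : fps) 0%N = 1 by apply: Eser0.
case: (leqP M (dd N j)) => hd.
  have hc : c N j = xs ^+ (dd N j) * (Q (2 * N) * sinv (Q j * Q m)).
    by rewrite mulrA -h' -mulrA sinvK // mulr1.
  have hx : eqm M (xs ^+ (dd N j)) 0 by apply: eqm_xn.
  have hc0 : eqm M (c N j) 0.
    rewrite hc -[M]addn0; apply: eqm0_mul => //; exact: (@eqm_xn M).
  by apply: eqm_trans (eqm_sym hx); rewrite -(mul0r (Eser 2 : fps)); apply: eqm_mul.
have hd' : (N - j + (j - N) < M)%N.
  move: hd; rewrite /dd; move: (N - j + (j - N))%N => d hd.
  have : (d <= d * d)%N by case: d {hd} => // d; rewrite leq_pmulr.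
  lia.
have hQ k : (M <= k)%N -> eqm M (Q k) (Eser 2).
  by move=> hk; apply: eqm_sym; apply: (eqm_le _ (@Eser_Pm 2 k isT)); lia.
have hQj := hQ j (_ : M <= j)%N; have hQm := hQ m (_ : M <= m)%N; have hQ2 := hQ (2 * N)%N (_ : M <= 2 * N)%N.
have k1 : eqm M (c N j * (Eser 2 : fps) * (Eser 2 : fps)) (xs ^+ (dd N j) * Eser 2).
  apply: (@eqm_trans _ _ (c N j * (Q j * Q m))).
    by rewrite -mulrA; apply: eqm_mul => //; apply: eqm_sym; apply: eqm_mul; (apply: hQj || apply: hQm); lia.
  by rewrite h'; apply: eqm_mul => //; apply: hQ2; lia.
have k2 := eqm_mul k1 (@eqm_refl M (sinv (Eser 2))).
by rewrite -!mulrA sinvK // !mulr1 in k2.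
all: lia.
Qed.

Lemma OQ N : O N * Q N = Pm 1 (2 * N).
Proof.
elim: N => [|N IH]; first by rewrite /O big_ord0 Q0 /Pm big_geq // mul1r.
rewrite (_ : (2 * N.+1 = (2 * N).+2)%N); last lia.
rewrite /O big_ord_recr /= PmS -/(O N) !PmS -IH !mul1n.
rewrite (_ : (2 * N + 1 = (2 * N).+1)%N); last lia.
rewrite (_ : (2 * N.+1 = (2 * N).+2)%N); last lia.
by move: (O N) (Q N) (xs ^+ (2 * N).+1) (xs ^+ (2 * N).+2) => A B C D; ring.
Qed.

Lemma gauss : th * (Eser 2 : fps) = (Eser 1 : fps) ^+ 2.
Proof.
apply: eqm_all => M; set N := (2 * M)%N.
have hsum := @sum_c N (2 * N).+1 (ltnSn _).
have hB := stepB N.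
have k1 : eqm M (\sum_(j < (2 * N).+1) (-1) ^+ j * c N j * (Eser 2 : fps))
                (\sum_(j < (2 * N).+1) (-1) ^+ j * xs ^+ (dd N j)).
  apply: eqm_sum => j _; rewrite -mulrA; apply: eqm_mul => //.
  by apply: stepC => //; have := ltn_ord j; lia.
rewrite -mulr_suml hsum in k1.
have k2 : eqm M (O N ^+ 2 * (Eser 2 : fps)) (thN N).
  have := eqm_mul (@eqm_refl M ((-1) ^+ N)) k1.
  by rewrite hB !mulrA sgn2 mul1r.
have k3 : eqm M (O N ^+ 2 * (Eser 2 : fps)) th.
  by apply: eqm_trans k2 (eqm_sym (th_stable _)); lia.
have hQ : eqm M (Q N) (Eser 2) by apply: eqm_sym; apply: (eqm_le _ (@Eser_Pm 2 N isT)); lia.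
have hP : eqm M (Eser 1) (Pm 1 (2 * N)) by apply: (eqm_le _ (@Eser_Pm 1 (2 * N) isT)); lia.
apply: eqm_sym; apply: (eqm_trans (eqm_exp 2 hP)).
rewrite -OQ exprMn.
apply: (@eqm_trans _ _ (O N ^+ 2 * (Eser 2 : fps) * (Eser 2 : fps))).
  by rewrite -mulrA; apply: eqm_mul => //; rewrite expr2; apply: eqm_mul.
by apply: eqm_mul.
Qed.

Lemma sq_mod3 s m : (s * s)%N <> (3 * m + 2)%N.
Proof.
have e := divn_eq s 3; have := ltn_pmod s (isT : (0 < 3)%N).
move: (s %/ 3)%N (s %% 3)%N e => q r -> hr.
case: r hr => [|[|[|r]]] // _; nia.
Qed.

Lemma D2th : D 2 th = 0.
Proof. by apply: funext => m; rewrite /D zeroE th_nsq // => s e; apply: (@sq_mod3 s m). Qed.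

Lemma wint3 t : wint (3 * t) = wint t.
Proof.
rewrite /wint; case: t => [|t] //.
by rewrite (_ : (3 * t.+1 == 0)%N = false) ?exprM //; lia.
Qed.

Lemma D0th : D 0 th = V th.
Proof.
apply: funext => m; rewrite /D addn0.
case: (pselect (exists s, (3 * m)%N = (s * s)%N)) => [[s e]|ne].
  have h3 : (3 %| s)%N.
    have : (3 %| s * s)%N by rewrite -e dvdn_mulr.
    by rewrite Euclid_dvdM // orbb.
  case/dvdnP: h3 => t ht; subst s.
  have hm : m = (3 * (t * t))%N by nia.
  by rewrite e th_sq hm V3 th_sq (mulnC t 3) wint3.
rewrite th_nsq; last by move=> s e; apply: ne; exists s.
rewrite VE; case: ifP => // /eqP hm.
rewrite th_nsq // => t e; apply: ne; exists (3 * t)%N.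
have := divn_eq m 3; rewrite hm addn0 e; nia.
Qed.

Lemma th0 : th 0%N = 1.
Proof. by rewrite (th_sq 0). Qed.

Lemma eqm_V M f g : eqm M f g -> eqm M (V f) (V g).
Proof.
move=> h n hn; rewrite /V; case: ifP => // _; apply: h.
by apply: leq_ltn_trans hn; apply: leq_div.
Qed.

Lemma V_Pm m K : V (Pm m K) = Pm (3 * m) K.
Proof.
elim: K => [|K IH]; first by rewrite /Pm !big_geq // V1.
by rewrite !PmS VM IH VB V1 VX mulnA.
Qed.

Lemma V_Eser m : (0 < m)%N -> V (Eser m) = Eser (3 * m).
Proof.
move=> hm; apply: eqm_all => M.
apply: (eqm_trans (eqm_V (eqm_le (leqnSn M) (@Eser_Pm m M hm)))).
rewrite V_Pm; apply: eqm_sym; apply: (eqm_le (leqnSn M)); apply: Eser_Pm; lia.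
Qed.

Lemma exp0coef (f : fps) k : (f ^+ k) 0%N = f 0%N ^+ k.
Proof. by elim: k => [|k IH]; rewrite ?expr0 // !exprS mul0coef IH. Qed.

Lemma cancel_unit (f g u : fps) : u 0%N = 1 -> f * u = g * u -> f = g.
Proof.
move=> u0 e; rewrite -[f]mulr1 -[g]mulr1 -(sinvK u0) !mulrA e //.
Qed.

Notation E m := (Eser m : fps).
Definition A : fps := V th.
Definition B : fps := D 1 th.
Definition Pi : fps := sinv th.

Lemma thPi : th * Pi = 1. Proof. exact: sinvK th0. Qed.

Lemma NmE' m : (0 < m)%N -> ~~ (3 %| m)%N -> Nm (E m) * E (3 * m) = E m ^+ 4.
Proof. exact: NmE. Qed.

Lemma Nm_th : Nm th = A ^+ 3 + xs * B ^+ 3.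
Proof. by rewrite /Nm D0th D2th -/A -/B; ring. Qed.

Lemma R1 : (A ^+ 3 + xs * B ^+ 3) * A = th ^+ 4.
Proof.
have hN1 := @NmE' 1 isT isT; have hN2 := @NmE' 2 isT isT.
have hg := gauss.
have hV : A * E 6 = E 3 ^+ 2.
  have e6 : E 6 = V (E 2) by rewrite V_Eser.
  have e3 : E 3 = V (E 1) by rewrite V_Eser.
  by rewrite /A e6 e3 -VM hg expr2 VM.
have hNg : Nm th * Nm (E 2) = Nm (E 1) ^+ 2 by rewrite -NmM hg expr2 NmM.
rewrite -Nm_th.
apply: (@cancel_unit _ _ (E 2 ^+ 4 * E 6)).
  by rewrite mul0coef exp0coef !Eser0 expr1n mul1r.
rewrite -{1}hN2.
transitivity ((Nm th * Nm (E 2)) * (A * E 6) * E 6); first ring.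
rewrite hNg hV.
transitivity ((Nm (E 1) * E 3) ^+ 2 * E 6); first ring.
rewrite hN1.
transitivity ((th * E 2) ^+ 4 * E 6); last ring.
by rewrite hg; ring.
Qed.

Lemma VXn (f : fps) n : V (f ^+ n) = V f ^+ n.
Proof. by elim: n => [|n IH]; rewrite ?V1 // !exprS VM IH. Qed.

Lemma Vtriv (a : fps) : V a = V a + xs * V 0 + xs ^+ 2 * V 0.
Proof. by rewrite V0; ring. Qed.

Lemma D0V (a f : fps) : D 0 (V a * f) = a * D 0 f.
Proof.
rewrite D0M (Vtriv a) D0c D1c D2c; ring.
Qed.

Lemma Xeq : (Xser : fps) = A ^+ 4 * Pi ^+ 4.
Proof.
have -> : (Xser : fps) = E 2 ^+ 4 * E 3 ^+ 8 * sinv (E 1 ^+ 8 * E 6 ^+ 4) by rewrite /Xser -!spowE.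
have W0 : (E 1 ^+ 8 * E 6 ^+ 4) 0%N = 1 by rewrite mul0coef !exp0coef !Eser0 !expr1n mul1r.
have hV : A * E 6 = E 3 ^+ 2.
  have e6 : E 6 = V (E 2) by rewrite V_Eser.
  have e3 : E 3 = V (E 1) by rewrite V_Eser.
  by rewrite /A e6 e3 -VM gauss expr2 VM.
have key : A ^+ 4 * Pi ^+ 4 * (E 1 ^+ 8 * E 6 ^+ 4) = E 2 ^+ 4 * E 3 ^+ 8.
  transitivity ((A * E 6) ^+ 4 * Pi ^+ 4 * (E 1 ^+ 2) ^+ 4); first ring.
  rewrite hV -gauss.
  transitivity (E 3 ^+ 8 * E 2 ^+ 4 * (th * Pi) ^+ 4); first ring.
  by rewrite thPi; ring.
by rewrite -key -mulrA sinvK // mulr1.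
Qed.

Definition Pbar : fps := V (A ^+ 2) + xs * V (- (A * B)) + xs ^+ 2 * V (B ^+ 2).

Lemma thdis : th = V A + xs * V B + xs ^+ 2 * V 0.
Proof. by rewrite {1}(dissect th) D0th D2th. Qed.

Lemma thPbar : th * Pbar = V (A ^+ 3 + xs * B ^+ 3).
Proof.
rewrite (dissect (th * Pbar)) D0M D1M D2M.
rewrite !D0th !D2th -/A -/B /Pbar !D0c !D1c !D2c.
rewrite (_ : A * - (A * B) + B * A ^+ 2 + xs * (0 * B ^+ 2) = 0); last ring.
rewrite (_ : A * B ^+ 2 + B * - (A * B) + 0 * A ^+ 2 = 0); last ring.
rewrite V0 !mulr0 !addr0; congr V; ring.
Qed.

Lemma Pi_eq : Pi = Pbar * V (A * Pi ^+ 4).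
Proof.
have h : th * (Pbar * V (A * Pi ^+ 4)) = 1.
  rewrite mulrA thPbar -VM (_ : (A ^+ 3 + xs * B ^+ 3) * (A * Pi ^+ 4) = ((A ^+ 3 + xs * B ^+ 3) * A) * Pi ^+ 4); last ring.
  by rewrite R1 -exprMn thPi expr1n V1.
by rewrite -[LHS]mulr1 -h mulrA (mulrC Pi) thPi mul1r.
Qed.

Lemma Ux k : D 0 ((A ^+ 4 * Pi ^+ 4) ^+ k) = th ^+ (4 * k) * (A * Pi ^+ 4) ^+ (4 * k) * D 0 (Pbar ^+ (4 * k)).
Proof.
have -> : (A ^+ 4 * Pi ^+ 4) ^+ k = V (th ^+ (4 * k) * (A * Pi ^+ 4) ^+ (4 * k)) * Pbar ^+ (4 * k).
  have PE := Pi_eq; set Y := V (A * Pi ^+ 4) in PE *.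
  rewrite exprMn -!exprM [in Pi ^+ (4 * k)]PE exprMn VM !VXn -/A -/Y; ring.
by rewrite D0V mulrA.
Qed.

Fixpoint posR (p : positive) : fps :=
  match p with
  | xH => 1
  | xO p => 2%:R * posR p
  | xI p => 2%:R * posR p + 1
  end.

Definition zR (z : Z) : fps :=
  match z with Z0 => 0 | Zpos p => posR p | Zneg p => - posR p end.

Lemma posR_coef p (g : fps) n : (posR p * g) n = Posz (Pos.to_nat p) * g n.
Proof.
elim: p => [p IH|p IH|] /=.
- rewrite mulrDl mul1r addE -mulrA two_coef IH Pos2Nat.inj_xI.
  have e : (Posz (S (2 * Pos.to_nat p)%coq_nat) : int) = 2 * Posz (Pos.to_nat p) + 1 by lia.
  by rewrite e; ring.
- rewrite -mulrA two_coef IH Pos2Nat.inj_xO.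
  have e : (Posz ((2 * Pos.to_nat p)%coq_nat) : int) = 2 * Posz (Pos.to_nat p) by lia.
  by rewrite e; ring.
- by rewrite !mul1r.
Qed.

Lemma zR_coef z (g : fps) n : (zR z * g) n = zi z * g n.
Proof.
case: z => [|p|p] /=; first by rewrite mul0r zeroE mul0r.
  exact: posR_coef.
by rewrite mulNr oppE posR_coef mulNr.
Qed.

Lemma scomb_eq cs (f : fps) : scomb cs f = \sum_(i < size cs) zR (nth Z0 cs i) * f ^+ i.
Proof.
apply: funext => n; rewrite /scomb sumE; apply: eq_bigr => i _.
by rewrite zR_coef spowE.
Qed.

Lemma UopD (f : fps) : Uop f = D 0 f.
Proof. by apply: funext => n; rewrite /Uop /D addn0. Qed.

Lemma Zrel : A * (xs * B ^+ 3) * Pi ^+ 4 = 1 - A ^+ 4 * Pi ^+ 4.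
Proof.
have h := R1.
have : ((A ^+ 3 + xs * B ^+ 3) * A) * Pi ^+ 4 = (th * Pi) ^+ 4 by rewrite h exprMn.
by rewrite thPi expr1n => <-; ring.
Qed.

Lemma P1_0 : D 0 (Pbar) = (1%:R) * A ^+ 2.
Proof. by rewrite /Pbar D0c; ring. Qed.

Lemma P1_1 : D 1 (Pbar) = (- 1%:R) * A ^+ 1 * B ^+ 1.
Proof. by rewrite /Pbar D1c; ring. Qed.

Lemma P1_2 : D 2 (Pbar) = (1%:R) * B ^+ 2.
Proof. by rewrite /Pbar D2c; ring. Qed.

Lemma P2_0 : D 0 (Pbar ^+ 2) = (- 2%:R) * A ^+ 1 * B ^+ 3 * xs ^+ 1 + (1%:R) * A ^+ 4.
Proof. rewrite expr2 D0M P1_0 P1_1 P1_2; cbn [posR]; ring. Qed.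

Lemma P2_1 : D 1 (Pbar ^+ 2) = (1%:R) * B ^+ 4 * xs ^+ 1 + (- 2%:R) * A ^+ 3 * B ^+ 1.
Proof. rewrite expr2 D1M P1_0 P1_1 P1_2; cbn [posR]; ring. Qed.

Lemma P2_2 : D 2 (Pbar ^+ 2) = (3%:R) * A ^+ 2 * B ^+ 2.
Proof. rewrite expr2 D2M P1_0 P1_1 P1_2; cbn [posR]; ring. Qed.

Lemma P4_0 : D 0 (Pbar ^+ 4) = (10%:R) * A ^+ 2 * B ^+ 6 * xs ^+ 2 + (- 16%:R) * A ^+ 5 * B ^+ 3 * xs ^+ 1 + (1%:R) * A ^+ 8.
Proof. rewrite (exprD Pbar 2 2) D0M P2_0 P2_1 P2_2; cbn [posR]; ring. Qed.

Lemma P4_1 : D 1 (Pbar ^+ 4) = (- 4%:R) * A ^+ 1 * B ^+ 7 * xs ^+ 2 + (19%:R) * A ^+ 4 * B ^+ 4 * xs ^+ 1 + (- 4%:R) * A ^+ 7 * B ^+ 1.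
Proof. rewrite (exprD Pbar 2 2) D1M P2_0 P2_1 P2_2; cbn [posR]; ring. Qed.

Lemma P4_2 : D 2 (Pbar ^+ 4) = (1%:R) * B ^+ 8 * xs ^+ 2 + (- 16%:R) * A ^+ 3 * B ^+ 5 * xs ^+ 1 + (10%:R) * A ^+ 6 * B ^+ 2.
Proof. rewrite (exprD Pbar 2 2) D2M P2_0 P2_1 P2_2; cbn [posR]; ring. Qed.

Lemma P8_0 : D 0 (Pbar ^+ 8) = (- 8%:R) * A ^+ 1 * B ^+ 15 * xs ^+ 5 + (posR 266%positive) * A ^+ 4 * B ^+ 12 * xs ^+ 4 + (- posR 1016%positive) * A ^+ 7 * B ^+ 9 * xs ^+ 3 + (posR 784%positive) * A ^+ 10 * B ^+ 6 * xs ^+ 2 + (- posR 112%positive) * A ^+ 13 * B ^+ 3 * xs ^+ 1 + (1%:R) * A ^+ 16.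
Proof. rewrite (exprD Pbar 4 4) D0M P4_0 P4_1 P4_2; cbn [posR]; ring. Qed.

Lemma P8_1 : D 1 (Pbar ^+ 8) = (1%:R) * B ^+ 16 * xs ^+ 5 + (- posR 112%positive) * A ^+ 3 * B ^+ 13 * xs ^+ 4 + (posR 784%positive) * A ^+ 6 * B ^+ 10 * xs ^+ 3 + (- posR 1016%positive) * A ^+ 9 * B ^+ 7 * xs ^+ 2 + (posR 266%positive) * A ^+ 12 * B ^+ 4 * xs ^+ 1 + (- 8%:R) * A ^+ 15 * B ^+ 1.
Proof. rewrite (exprD Pbar 4 4) D1M P4_0 P4_1 P4_2; cbn [posR]; ring. Qed.

Lemma P8_2 : D 2 (Pbar ^+ 8) = (36%:R) * A ^+ 2 * B ^+ 14 * xs ^+ 4 + (- posR 504%positive) * A ^+ 5 * B ^+ 11 * xs ^+ 3 + (posR 1107%positive) * A ^+ 8 * B ^+ 8 * xs ^+ 2 + (- posR 504%positive) * A ^+ 11 * B ^+ 5 * xs ^+ 1 + (36%:R) * A ^+ 14 * B ^+ 2.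
Proof. rewrite (exprD Pbar 4 4) D2M P4_0 P4_1 P4_2; cbn [posR]; ring. Qed.

Lemma P12_0 : D 0 (Pbar ^+ 12) = (1%:R) * B ^+ 24 * xs ^+ 8 + (- posR 352%positive) * A ^+ 3 * B ^+ 21 * xs ^+ 7 + (posR 8074%positive) * A ^+ 6 * B ^+ 18 * xs ^+ 6 + (- posR 43252%positive) * A ^+ 9 * B ^+ 15 * xs ^+ 5 + (posR 73789%positive) * A ^+ 12 * B ^+ 12 * xs ^+ 4 + (- posR 43252%positive) * A ^+ 15 * B ^+ 9 * xs ^+ 3 + (posR 8074%positive) * A ^+ 18 * B ^+ 6 * xs ^+ 2 + (- posR 352%positive) * A ^+ 21 * B ^+ 3 * xs ^+ 1 + (1%:R) * A ^+ 24.
Proof. rewrite (exprD Pbar 8 4) D0M P8_0 P8_1 P8_2 P4_0 P4_1 P4_2; cbn [posR]; ring. Qed.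

Lemma P12_1 : D 1 (Pbar ^+ 12) = (posR 78%positive) * A ^+ 2 * B ^+ 22 * xs ^+ 7 + (- posR 3432%positive) * A ^+ 5 * B ^+ 19 * xs ^+ 6 + (posR 28314%positive) * A ^+ 8 * B ^+ 16 * xs ^+ 5 + (- posR 69576%positive) * A ^+ 11 * B ^+ 13 * xs ^+ 4 + (posR 58278%positive) * A ^+ 14 * B ^+ 10 * xs ^+ 3 + (- posR 16236%positive) * A ^+ 17 * B ^+ 7 * xs ^+ 2 + (posR 1221%positive) * A ^+ 20 * B ^+ 4 * xs ^+ 1 + (- 12%:R) * A ^+ 23 * B ^+ 1.
Proof. rewrite (exprD Pbar 8 4) D1M P8_0 P8_1 P8_2 P4_0 P4_1 P4_2; cbn [posR]; ring. Qed.

Lemma P12_2 : D 2 (Pbar ^+ 12) = (- 12%:R) * A ^+ 1 * B ^+ 23 * xs ^+ 7 + (posR 1221%positive) * A ^+ 4 * B ^+ 20 * xs ^+ 6 + (- posR 16236%positive) * A ^+ 7 * B ^+ 17 * xs ^+ 5 + (posR 58278%positive) * A ^+ 10 * B ^+ 14 * xs ^+ 4 + (- posR 69576%positive) * A ^+ 13 * B ^+ 11 * xs ^+ 3 + (posR 28314%positive) * A ^+ 16 * B ^+ 8 * xs ^+ 2 + (- posR 3432%positive) * A ^+ 19 * B ^+ 5 * xs ^+ 1 + (posR 78%positive) * A ^+ 22 * B ^+ 2.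
Proof. rewrite (exprD Pbar 8 4) D2M P8_0 P8_1 P8_2 P4_0 P4_1 P4_2; cbn [posR]; ring. Qed.


Lemma to_fps (a b : series) : @eq fps a b -> a = b. Proof. by []. Qed.

Lemma fin1 : Uop Xser = scomb [:: 0; 10; -36; 27]%coqZ Xser.
Proof.
apply: to_fps.
rewrite scomb_eq UopD Xeq.
rewrite -[A ^+ 4 * Pi ^+ 4]expr1.
rewrite (Ux 1) P4_0.
rewrite /= !big_ord_recl big_ord0 /=.
transitivity (((1%:R) * (A ^+ 4 * Pi ^+ 4) ^+ 3 * (A * (xs * B ^+ 3) * Pi ^+ 4) ^+ 0 + (- 16%:R) * (A ^+ 4 * Pi ^+ 4) ^+ 2 * (A * (xs * B ^+ 3) * Pi ^+ 4) ^+ 1 + (10%:R) * (A ^+ 4 * Pi ^+ 4) ^+ 1 * (A * (xs * B ^+ 3) * Pi ^+ 4) ^+ 2) * (th * Pi) ^+ 4).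
  cbn [posR]; ring.
rewrite thPi Zrel; cbn [zR posR]; move: (A ^+ 4 * Pi ^+ 4) => X; ring.
Qed.

Lemma fin2 : Uop (spow Xser 2) = scomb [:: 0; -8; 306; -2160; 5508; -5832; 2187]%coqZ Xser.
Proof.
apply: to_fps.
rewrite scomb_eq UopD spowE Xeq.

rewrite (Ux 2) P8_0.
rewrite /= !big_ord_recl big_ord0 /=.
transitivity (((1%:R) * (A ^+ 4 * Pi ^+ 4) ^+ 6 * (A * (xs * B ^+ 3) * Pi ^+ 4) ^+ 0 + (- posR 112%positive) * (A ^+ 4 * Pi ^+ 4) ^+ 5 * (A * (xs * B ^+ 3) * Pi ^+ 4) ^+ 1 + (posR 784%positive) * (A ^+ 4 * Pi ^+ 4) ^+ 4 * (A * (xs * B ^+ 3) * Pi ^+ 4) ^+ 2 + (- posR 1016%positive) * (A ^+ 4 * Pi ^+ 4) ^+ 3 * (A * (xs * B ^+ 3) * Pi ^+ 4) ^+ 3 + (posR 266%positive) * (A ^+ 4 * Pi ^+ 4) ^+ 2 * (A * (xs * B ^+ 3) * Pi ^+ 4) ^+ 4 + (- 8%:R) * (A ^+ 4 * Pi ^+ 4) ^+ 1 * (A * (xs * B ^+ 3) * Pi ^+ 4) ^+ 5) * (th * Pi) ^+ 8).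
  cbn [posR]; ring.
rewrite thPi Zrel; cbn [zR posR]; move: (A ^+ 4 * Pi ^+ 4) => X; ring.
Qed.

Lemma fin3 : Uop (spow Xser 3) = scomb [:: 0; 1; -360; 10566; -99144; 423549; -944784; 1141614;
              -708588; 177147]%coqZ Xser.
Proof.
apply: to_fps.
rewrite scomb_eq UopD spowE Xeq.

rewrite (Ux 3) P12_0.
rewrite /= !big_ord_recl big_ord0 /=.
transitivity (((1%:R) * (A ^+ 4 * Pi ^+ 4) ^+ 9 * (A * (xs * B ^+ 3) * Pi ^+ 4) ^+ 0 + (- posR 352%positive) * (A ^+ 4 * Pi ^+ 4) ^+ 8 * (A * (xs * B ^+ 3) * Pi ^+ 4) ^+ 1 + (posR 8074%positive) * (A ^+ 4 * Pi ^+ 4) ^+ 7 * (A * (xs * B ^+ 3) * Pi ^+ 4) ^+ 2 + (- posR 43252%positive) * (A ^+ 4 * Pi ^+ 4) ^+ 6 * (A * (xs * B ^+ 3) * Pi ^+ 4) ^+ 3 + (posR 73789%positive) * (A ^+ 4 * Pi ^+ 4) ^+ 5 * (A * (xs * B ^+ 3) * Pi ^+ 4) ^+ 4 + (- posR 43252%positive) * (A ^+ 4 * Pi ^+ 4) ^+ 4 * (A * (xs * B ^+ 3) * Pi ^+ 4) ^+ 5 + (posR 8074%positive) * (A ^+ 4 * Pi ^+ 4) ^+ 3 * (A * (xs * B ^+ 3) * Pi ^+ 4) ^+ 6 + (- posR 352%positive) * (A ^+ 4 * Pi ^+ 4) ^+ 2 * (A * (xs * B ^+ 3) * Pi ^+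 4) ^+ 7 + (1%:R) * (A ^+ 4 * Pi ^+ 4) ^+ 1 * (A * (xs * B ^+ 3) * Pi ^+ 4) ^+ 8) * (th * Pi) ^+ 12).
  cbn [posR]; ring.
rewrite thPi Zrel; cbn [zR posR]; move: (A ^+ 4 * Pi ^+ 4) => X; ring.
Qed.


Theorem theorem2p3 :
  Uop Xser = scomb [:: 0; 10; -36; 27]%coqZ Xser /\
  Uop (spow Xser 2) =
    scomb [:: 0; -8; 306; -2160; 5508; -5832; 2187]%coqZ Xser /\
  Uop (spow Xser 3) =
    scomb [:: 0; 1; -360; 10566; -99144; 423549; -944784; 1141614;
              -708588; 177147]%coqZ Xser.
Proof.
split; first exact: fin1.
split; first exact: fin2.
exact: fin3.
Qed.
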